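(* Let $H(\cdot)=H(\cdot;b_r)$ be as in the context, with $b=b_r\vee b^{**}$. Then: (I) $H'(x)>0$ for all $x\ge0$. (II) $H(0)\ge0$ if and only if $r_1e^{r_1b}-r_2e^{r_2b}\le\frac{r_1-r_2}{k}$; and $H(0)\le0$ if and only if $r_1e^{r_1b}-r_2e^{r_2b}\ge\frac{r_1-r_2}{k}$. (III) Condition (K) is equivalent to $b^{**}\le b^*$, which is equivalent to $r_1e^{r_1b^{**}}-r_2e^{r_2b^{**}}\le\frac{r_1-r_2}{k}$. Likewise, (K) with reversed inequality is equivalent to $b^{**}\ge b^*$, which is equivalent to $r_1e^{r_1b^{**}}-r_2e^{r_2b^{**}}\ge\frac{r_1-r_2}{k}$. (IV) If $b_r\le b^{**}$, then $H(0)\ge0$ is equivalent to (K), and $H(0)\le0$ is equivalent to (K) with reversed inequality. (V) If (K) holds with reversed inequality, then $H(0;b_r)\le0$ for every $b_r\ge0$. (VI) If (K) holds, then the equation $r_1e^{r_1\hat b}-r_2e^{r_2\hat b}=\frac{r_1-r_2}{k}$ has a unique solution $\hat b$ in $[b^{**},\infty)$, and $H(0;b_r)\ge0$ if and only if $b_r\le\hat b$.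
   Context: Fix parameters $\mu>0$, $\sigma>0$, $\alpha>0$ and $k>1$. Set $r_1:=-\frac{\mu}{\sigma^2}+\sqrt{\frac{\mu^2}{\sigma^4}+\frac{2\alpha}{\sigma^2}}$ and $r_2:=-\frac{\mu}{\sigma^2}-\sqrt{\frac{\mu^2}{\sigma^4}+\frac{2\alpha}{\sigma^2}}$ (so $r_2<0<r_1$ and $r_2^2>r_1^2$). Let $b^*:=\frac{\log(r_2^2/r_1^2)}{r_1-r_2}>0$ and let $b^{**}>0$ be the unique positive solution of $r_1e^{-r_2b}-r_2e^{-r_1b}=k(r_1-r_2)$. For a dividend payout barrier $b_r\ge0$ put $b=b_r\vee b^{**}$ and define $H(x;b_r):=\frac{1}{e^{r_1b}-e^{r_2b}}\Big(\frac{1-ke^{r_2b}}{r_1}e^{r_1x}-\frac{1-ke^{r_1b}}{r_2}e^{r_2x}\Big)$ for $0\le x\le b$ and $H(x;b_r):=x-b+\frac{1}{e^{r_1b}-e^{r_2b}}\Big(\frac{1-ke^{r_2b}}{r_1}e^{r_1b}-\frac{1-ke^{r_1b}}{r_2}e^{r_2b}\Big)$ for $x>b$. Condition (K) is the inequality $k\le\dfrac{r_1-r_2}{r_1\left(\frac{r_2^2}{r_1^2}\right)^{\frac{r_1}{r_1-r_2}}-r_2\left(\frac{r_2^2}{r_1^2}\right)^{\frac{r_2}{r_1-r_2}}}$. *)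

(* Defs.v *)
From Stdlib Require Import Reals Lra.
Open Scope R_scope.

Definition r1 (mu sigma alpha : R) : R :=
  - mu / sigma ^ 2 + sqrt (mu ^ 2 / sigma ^ 4 + 2 * alpha / sigma ^ 2).
Definition r2 (mu sigma alpha : R) : R :=
  - mu / sigma ^ 2 - sqrt (mu ^ 2 / sigma ^ 4 + 2 * alpha / sigma ^ 2).

Definition bstar (mu sigma alpha : R) : R :=
  ln (r2 mu sigma alpha ^ 2 / r1 mu sigma alpha ^ 2)
    / (r1 mu sigma alpha - r2 mu sigma alpha).

Definition bss_eq (mu sigma alpha k b : R) : Prop :=
  r1 mu sigma alpha * exp (- r2 mu sigma alpha * b)
  - r2 mu sigma alpha * exp (- r1 mu sigma alpha * b)
  = k * (r1 mu sigma alpha - r2 mu sigma alpha).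

Definition G (mu sigma alpha b : R) : R :=
  r1 mu sigma alpha * exp (r1 mu sigma alpha * b)
  - r2 mu sigma alpha * exp (r2 mu sigma alpha * b).

(* The function H(x; b_r) with b = b_r \/ b**.  For x <= b the first
   (analytic) formula is used; this also extends H to x < 0 by the same
   formula (only x >= 0 is relevant). *)
Definition Hfun (mu sigma alpha k bss br x : R) : R :=
  let a1 := r1 mu sigma alpha in
  let a2 := r2 mu sigma alpha in
  let b := Rmax br bss in
  let D := exp (a1 * b) - exp (a2 * b) in
  let low y := / D * ((1 - k * exp (a2 * b)) / a1 * exp (a1 * y)
                      - (1 - k * exp (a1 * b)) / a2 * exp (a2 * y)) in
  if Rle_dec x b then low x else x - b + low b.

Definition Kbound (mu sigma alpha : R) : R :=
  let a1 := r1 mu sigma alpha in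
  let a2 := r2 mu sigma alpha in
  let q := a2 ^ 2 / a1 ^ 2 in
  (a1 - a2) / (a1 * Rpower q (a1 / (a1 - a2)) - a2 * Rpower q (a2 / (a1 - a2))).

Definition condK (mu sigma alpha k : R) : Prop := k <= Kbound mu sigma alpha.
Definition condK_rev (mu sigma alpha k : R) : Prop := k >= Kbound mu sigma alpha.

(* Main.v *)
Require Import Defs.
From Stdlib Require Import Reals Lra Psatz.
From Coquelicot Require Coquelicot.
Open Scope R_scope.

Module Helpers.
Import Coquelicot.Coquelicot.
Open Scope R_scope.

Definition Gf a1 a2 b := a1 * exp (a1 * b) - a2 * exp (a2 * b).
Definition Gd a1 a2 b := a1 ^ 2 * exp (a1 * b) - a2 ^ 2 * exp (a2 * b).
Definition phf a1 a2 b := a1 * exp (- a2 * b) - a2 * exp (- a1 * b).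
Definition phd a1 a2 b := - a1 * a2 * exp (- a2 * b) + a1 * a2 * exp (- a1 * b).

Lemma Gf_der a1 a2 b : derivable_pt_lim (Gf a1 a2) b (Gd a1 a2 b).
Proof. apply is_derive_Reals. unfold Gf, Gd. auto_derive; auto. ring. Qed.

Lemma phf_der a1 a2 b : derivable_pt_lim (phf a1 a2) b (phd a1 a2 b).
Proof. apply is_derive_Reals. unfold phf, phd. auto_derive; auto. ring. Qed.

Lemma low_der D P Q a1 a2 y : D <> 0 -> a1 <> 0 -> a2 <> 0 ->
  derivable_pt_lim (fun y => / D * (P / a1 * exp (a1 * y) - Q / a2 * exp (a2 * y))) y
    (/ D * (P * exp (a1 * y) - Q * exp (a2 * y))).
Proof. intros. apply is_derive_Reals. auto_derive; auto. field. tauto. Qed.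

Lemma strict_incr f f' x y :
  (forall c, x <= c <= y -> derivable_pt_lim f c (f' c)) ->
  (forall c, x < c < y -> 0 < f' c) -> x < y -> f x < f y.
Proof.
  intros Hd Hp Hxy. destruct (MVT_cor2 f f' x y Hxy Hd) as [c [Hc Hc']].
  specialize (Hp c Hc'). nra.
Qed.

Lemma strict_decr f f' x y :
  (forall c, x <= c <= y -> derivable_pt_lim f c (f' c)) ->
  (forall c, x < c < y -> f' c < 0) -> x < y -> f y < f x.
Proof.
  intros Hd Hp Hxy. destruct (MVT_cor2 f f' x y Hxy Hd) as [c [Hc Hc']].
  specialize (Hp c Hc'). nra.
Qed.

Definition bst a1 a2 := ln (a2 ^ 2 / a1 ^ 2) / (a1 - a2).

Lemma q_gt1 a1 a2 : 0 < a1 -> a2 < 0 -> a1 + a2 < 0 -> 1 < a2 ^ 2 / a1 ^ 2.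
Proof.
  intros. apply (Rmult_lt_reg_r (a1^2)). nra.
  field_simplify; [nra|lra].
Qed.

Lemma bst_pos a1 a2 : 0 < a1 -> a2 < 0 -> a1 + a2 < 0 -> 0 < bst a1 a2.
Proof.
  intros. unfold bst. apply Rdiv_lt_0_compat; [|lra].
  apply exp_lt_inv. rewrite exp_0, exp_ln. now apply q_gt1. pose proof (q_gt1 a1 a2); lra.
Qed.

Lemma Gd_id a1 a2 b : 0 < a1 -> a2 < 0 -> a1 + a2 < 0 ->
  Gd a1 a2 b = a2 ^ 2 * exp (a2 * b) * (exp ((a1 - a2) * (b - bst a1 a2)) - 1).
Proof.
  intros. pose proof (q_gt1 a1 a2 H H0 H1).
  replace ((a1 - a2) * (b - bst a1 a2)) with (a1 * b + (- (a2 * b) + - ln (a2^2/a1^2))).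
  2:{ unfold bst. field. lra. }
  rewrite !exp_plus, !exp_Ropp, exp_ln by lra. unfold Gd.
  pose proof (exp_pos (a2*b)). field. split; nra.
Qed.

Lemma Gd_neg a1 a2 b : 0 < a1 -> a2 < 0 -> a1 + a2 < 0 -> b < bst a1 a2 -> Gd a1 a2 b < 0.
Proof.
  intros. rewrite Gd_id by auto.
  assert (exp ((a1 - a2) * (b - bst a1 a2)) < 1).
  { rewrite <- exp_0. apply exp_increasing. nra. }
  pose proof (exp_pos (a2*b)). assert (0 < a2^2) by nra. 
  assert (0 < a2 ^ 2 * exp (a2 * b)) by nra. nra.
Qed.

Lemma Gd_pos a1 a2 b : 0 < a1 -> a2 < 0 -> a1 + a2 < 0 -> bst a1 a2 < b -> 0 < Gd a1 a2 b.
Proof.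
  intros. rewrite Gd_id by auto.
  assert (1 < exp ((a1 - a2) * (b - bst a1 a2))).
  { rewrite <- exp_0. apply exp_increasing. nra. }
  pose proof (exp_pos (a2*b)). assert (0 < a2^2) by nra. 
  assert (0 < a2 ^ 2 * exp (a2 * b)) by nra. nra.
Qed.

Lemma Gd_zero a1 a2 : 0 < a1 -> a2 < 0 -> a1 + a2 < 0 -> Gd a1 a2 (bst a1 a2) = 0.
Proof.
  intros. rewrite Gd_id by auto. replace ((a1 - a2) * (bst a1 a2 - bst a1 a2)) with 0 by ring.
  rewrite exp_0. ring.
Qed.

Lemma G_incr a1 a2 x y : 0 < a1 -> a2 < 0 -> a1 + a2 < 0 ->
  bst a1 a2 <= x -> x < y -> Gf a1 a2 x < Gf a1 a2 y.
Proof.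
  intros. apply (strict_incr _ (Gd a1 a2)); auto.
  - intros; apply Gf_der.
  - intros; apply Gd_pos; auto; lra.
Qed.

Lemma G_decr a1 a2 x y : 0 < a1 -> a2 < 0 -> a1 + a2 < 0 ->
  x < y -> y <= bst a1 a2 -> Gf a1 a2 y < Gf a1 a2 x.
Proof.
  intros. apply (strict_decr _ (Gd a1 a2)); auto.
  - intros; apply Gf_der.
  - intros; apply Gd_neg; auto; lra.
Qed.

Lemma ph_incr a1 a2 x y : 0 < a1 -> a2 < 0 -> 0 <= x -> x < y -> phf a1 a2 x < phf a1 a2 y.
Proof.
  intros. apply (strict_incr _ (phd a1 a2)); auto.
  - intros; apply phf_der.
  - intros c Hc. unfold phd.
    assert (exp (- a1 * c) < exp (- a2 * c)) by (apply exp_increasing; nra).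
    assert (a1 * a2 < 0) by nra. nra.
Qed.

Lemma ph_pos a1 a2 b : 0 < a1 -> a2 < 0 -> 0 < phf a1 a2 b.
Proof.
  intros. unfold phf. pose proof (exp_pos (- a2 * b)). pose proof (exp_pos (- a1 * b)). nra.
Qed.

Lemma key_id a1 a2 b :
  (Gf a1 a2 b * phf a1 a2 b - (a1 - a2) ^ 2) * (exp (a1 * b) * exp (a2 * b))
  = Gd a1 a2 b * (exp (a1 * b) - exp (a2 * b)).
Proof.
  unfold Gf, phf, Gd.
  replace (- a2 * b) with (- (a2 * b)) by ring. replace (- a1 * b) with (- (a1 * b)) by ring.
  rewrite !exp_Ropp. pose proof (exp_pos (a1*b)). pose proof (exp_pos (a2*b)).
  field. lra.
Qed.

Lemma Gd_le a1 a2 b : 0 < a1 -> a2 < 0 -> a1 + a2 < 0 -> (Gd a1 a2 b <= 0 <-> b <= bst a1 a2).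
Proof.
  intros. destruct (Rtotal_order b (bst a1 a2)) as [h|[h|h]].
  - pose proof (Gd_neg a1 a2 b H H0 H1 h). lra.
  - subst. rewrite Gd_zero by auto. lra.
  - pose proof (Gd_pos a1 a2 b H H0 H1 h). lra.
Qed.

Lemma Gd_ge a1 a2 b : 0 < a1 -> a2 < 0 -> a1 + a2 < 0 -> (Gd a1 a2 b >= 0 <-> b >= bst a1 a2).
Proof.
  intros. destruct (Rtotal_order b (bst a1 a2)) as [h|[h|h]].
  - pose proof (Gd_neg a1 a2 b H H0 H1 h). lra.
  - subst. rewrite Gd_zero by auto. lra.
  - pose proof (Gd_pos a1 a2 b H H0 H1 h). lra.
Qed.

Lemma Gc_sign a1 a2 k b : 0 < a1 -> a2 < 0 -> 0 < k -> 0 < b ->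
  phf a1 a2 b = k * (a1 - a2) ->
  (Gf a1 a2 b <= (a1 - a2) / k <-> Gd a1 a2 b <= 0) /\
  (Gf a1 a2 b >= (a1 - a2) / k <-> Gd a1 a2 b >= 0).
Proof.
  intros. pose proof (key_id a1 a2 b). rewrite H3 in H4.
  pose proof (exp_pos (a1*b)). pose proof (exp_pos (a2*b)).
  assert (exp (a2*b) < exp (a1*b)) by (apply exp_increasing; nra).
  set (P := exp (a1 * b) * exp (a2 * b)) in *.
  set (Q := exp (a1 * b) - exp (a2 * b)) in *.
  assert (0 < P) by (unfold P; nra). assert (0 < Q) by (unfold Q; lra).
  set (X := Gf a1 a2 b * k - (a1 - a2)).
  assert (HX : (a1 - a2) * P * X = Gd a1 a2 b * Q) by (rewrite <- H4; unfold X; ring).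
  assert (0 < (a1 - a2) * P) by nra.
  assert (Hd : Gf a1 a2 b <= (a1 - a2) / k <-> X <= 0).
  { unfold X. split; intro h.
    - apply (Rmult_le_compat_r k) in h; [|lra].
      replace ((a1 - a2) / k * k) with (a1 - a2) in h by (field; lra). lra.
    - apply (Rmult_le_reg_r k); [lra|].
      replace ((a1 - a2) / k * k) with (a1 - a2) by (field; lra). lra. }
  assert (Hd' : Gf a1 a2 b >= (a1 - a2) / k <-> X >= 0).
  { unfold X. split; intro h.
    - apply Rge_le in h. apply (Rmult_le_compat_r k) in h; [|lra].
      replace ((a1 - a2) / k * k) with (a1 - a2) in h by (field; lra). lra.
    - apply Rle_ge. apply (Rmult_le_reg_r k); [lra|].
      replace ((a1 - a2) / k * k) with (a1 - a2) by (field; lra). lra. }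
  rewrite Hd, Hd'. split; split; intro; nra.
Qed.

Lemma Gph_bst a1 a2 : 0 < a1 -> a2 < 0 -> a1 + a2 < 0 ->
  Gf a1 a2 (bst a1 a2) * phf a1 a2 (bst a1 a2) = (a1 - a2) ^ 2.
Proof.
  intros. pose proof (key_id a1 a2 (bst a1 a2)). rewrite Gd_zero in H2 by auto.
  pose proof (exp_pos (a1*bst a1 a2)). pose proof (exp_pos (a2*bst a1 a2)).
  assert (0 < exp (a1 * bst a1 a2) * exp (a2 * bst a1 a2)) by nra. nra.
Qed.

Lemma Kb_eq a1 a2 : 0 < a1 -> a2 < 0 -> a1 + a2 < 0 ->
  (a1 - a2) / (a1 * Rpower (a2 ^ 2 / a1 ^ 2) (a1 / (a1 - a2)) -
               a2 * Rpower (a2 ^ 2 / a1 ^ 2) (a2 / (a1 - a2)))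
  = phf a1 a2 (bst a1 a2) / (a1 - a2).
Proof.
  intros. unfold Rpower.
  replace (a1 / (a1 - a2) * ln (a2 ^ 2 / a1 ^ 2)) with (a1 * bst a1 a2) by (unfold bst; field; lra).
  replace (a2 / (a1 - a2) * ln (a2 ^ 2 / a1 ^ 2)) with (a2 * bst a1 a2) by (unfold bst; field; lra).
  change (a1 * exp (a1 * bst a1 a2) - a2 * exp (a2 * bst a1 a2)) with (Gf a1 a2 (bst a1 a2)).
  pose proof (Gph_bst a1 a2 H H0 H1). pose proof (ph_pos a1 a2 (bst a1 a2) H H0).
  assert (Gf a1 a2 (bst a1 a2) <> 0) by (intro h; rewrite h in H2; nra).
  field_simplify_eq; [|split; lra]. nra.
Qed.

Lemma ph_le a1 a2 x y : 0 < a1 -> a2 < 0 -> 0 <= x -> 0 <= y ->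
  (phf a1 a2 x <= phf a1 a2 y <-> x <= y).
Proof.
  intros. destruct (Rtotal_order x y) as [h|[h|h]].
  - pose proof (ph_incr a1 a2 x y H H0 H1 h). lra.
  - subst; lra.
  - pose proof (ph_incr a1 a2 y x H H0 H2 h). lra.
Qed.

Lemma der_loc f g x l d : 0 < d -> (forall y, Rabs (y - x) < d -> f y = g y) ->
  derivable_pt_lim g x l -> derivable_pt_lim f x l.
Proof.
  intros Hd Heq Hg eps Heps. destruct (Hg eps Heps) as [del Hdel].
  assert (0 < Rmin del d) by (apply Rmin_pos; [apply cond_pos|lra]).
  exists (mkposreal _ H). intros h Hh Hhd. simpl in Hhd.
  rewrite !Heq. apply Hdel; auto. pose proof (Rmin_l del d); lra.
  - replace (x - x) with 0 by ring. rewrite Rabs_R0; lra.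
  - replace (x + h - x) with h by ring. pose proof (Rmin_r del d); lra.
Qed.

Lemma der_glue f g k b l : derivable_pt_lim g b l -> derivable_pt_lim k b l -> g b = k b ->
  (forall y, y <= b -> f y = g y) -> (forall y, b < y -> f y = k y) -> derivable_pt_lim f b l.
Proof.
  intros Hg Hk Hb Hf1 Hf2 eps Heps. destruct (Hg eps Heps) as [d1 H1].
  destruct (Hk eps Heps) as [d2 H2].
  assert (0 < Rmin d1 d2) by (apply Rmin_pos; apply cond_pos).
  exists (mkposreal _ H). intros h Hh Hhd. simpl in Hhd.
  pose proof (Rmin_l d1 d2). pose proof (Rmin_r d1 d2).
  rewrite (Hf1 b) by lra.
  destruct (Rle_dec h 0).
  - rewrite Hf1 by lra. apply H1; auto; lra.
  - rewrite Hf2 by lra. rewrite Hb. apply H2; auto; lra.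
Qed.

Definition lowf a1 a2 k b y := / (exp (a1 * b) - exp (a2 * b)) *
  ((1 - k * exp (a2 * b)) / a1 * exp (a1 * y) - (1 - k * exp (a1 * b)) / a2 * exp (a2 * y)).
Definition Hf a1 a2 k b x := if Rle_dec x b then lowf a1 a2 k b x else x - b + lowf a1 a2 k b b.

Lemma lowd_pos a1 a2 k b y : 0 < a1 -> a2 < 0 -> 1 < k -> 0 < b -> y <= b ->
  0 < / (exp (a1 * b) - exp (a2 * b)) *
   ((1 - k * exp (a2 * b)) * exp (a1 * y) - (1 - k * exp (a1 * b)) * exp (a2 * y)).
Proof.
  intros. assert (exp (a2*b) < exp (a1*b)) by (apply exp_increasing; nra).
  pose proof (exp_pos (a1*b)). pose proof (exp_pos (a2*b)).
  pose proof (exp_pos (a1*y)). pose proof (exp_pos (a2*y)).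
  assert (1 < exp (a1*b)) by (rewrite <- exp_0; apply exp_increasing; nra).
  assert (Hc : exp (a1 * y) * exp (a2 * b) <= exp (a1 * b) * exp (a2 * y)).
  { rewrite <- !exp_plus. destruct (Req_dec y b). subst; right; f_equal; ring.
    left. apply exp_increasing. nra. }
  apply Rmult_lt_0_compat. apply Rinv_0_lt_compat; lra.
  set (P := 1 - k * exp (a2 * b)). set (Q := 1 - k * exp (a1 * b)).
  assert (HD : P * exp (a1 * b) - Q * exp (a2 * b) = exp (a1 * b) - exp (a2 * b)) by (unfold P, Q; ring).
  assert (Q < 0) by (unfold Q; nra).
  apply (Rmult_lt_reg_r (exp (a2 * b))); auto. rewrite Rmult_0_l.
  destruct (Rle_dec 0 P).
  - assert (0 <= P * exp (a1 * y)) by nra.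
    assert (Q * exp (a2 * y) < 0) by nra. nra.
  - assert (P * (exp (a1 * y) * exp (a2 * b)) >= P * (exp (a1 * b) * exp (a2 * y))) by nra.
    nra.
Qed.

Lemma lowd_b a1 a2 k b : 0 < a1 -> a2 < 0 -> 0 < b ->
  / (exp (a1 * b) - exp (a2 * b)) *
   ((1 - k * exp (a2 * b)) * exp (a1 * b) - (1 - k * exp (a1 * b)) * exp (a2 * b)) = 1.
Proof.
  intros. assert (exp (a2*b) < exp (a1*b)) by (apply exp_increasing; nra). field. lra.
Qed.

Lemma Hf_der a1 a2 k b x : 0 < a1 -> a2 < 0 -> 1 < k -> 0 < b ->
  exists l, derivable_pt_lim (Hf a1 a2 k b) x l /\ 0 < l.
Proof.
  intros. assert (exp (a2*b) < exp (a1*b)) by (apply exp_increasing; nra).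
  assert (HD : exp (a1 * b) - exp (a2 * b) <> 0) by lra.
  destruct (Rtotal_order x b) as [h|[h|h]].
  - eexists; split.
    + apply (der_loc _ (lowf a1 a2 k b) x _ (b - x)). lra.
      2: apply (low_der _ _ _ a1 a2 x); auto; lra.
      intros y Hy. unfold Hf. destruct (Rle_dec y b). reflexivity.
      exfalso. apply Rabs_def2 in Hy. lra.
    + apply lowd_pos; auto; lra.
  - subst x. exists 1. split; [|lra].
    apply (der_glue _ (lowf a1 a2 k b) (fun y => y - b + lowf a1 a2 k b b)).
    + rewrite <- (lowd_b a1 a2 k b) by auto. apply low_der; auto; lra.
    + apply is_derive_Reals. auto_derive; auto; try ring.
    + ring.
    + intros y Hy. unfold Hf. destruct (Rle_dec y b); [reflexivity|lra].
    + intros y Hy. unfold Hf. destruct (Rle_dec y b); [lra|reflexivity].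
  - exists 1. split; [|lra].
    apply (der_loc _ (fun y => y - b + lowf a1 a2 k b b) x _ (x - b)). lra.
    + intros y Hy. unfold Hf. apply Rabs_def2 in Hy. destruct (Rle_dec y b); [lra|reflexivity].
    + apply is_derive_Reals. auto_derive; auto; try ring.
Qed.

Lemma H0_sign a1 a2 k b : 0 < a1 -> a2 < 0 -> 1 < k -> 0 < b ->
  (0 <= Hf a1 a2 k b 0 <-> Gf a1 a2 b <= (a1 - a2) / k) /\
  (Hf a1 a2 k b 0 <= 0 <-> Gf a1 a2 b >= (a1 - a2) / k).
Proof.
  intros. assert (exp (a2*b) < exp (a1*b)) by (apply exp_increasing; nra).
  unfold Hf. destruct (Rle_dec 0 b); [|lra]. unfold lowf.
  rewrite !Rmult_0_r, exp_0, !Rmult_1_r.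
  set (D := exp (a1 * b) - exp (a2 * b)).
  set (Y := (1 - k * exp (a2 * b)) / a1 - (1 - k * exp (a1 * b)) / a2).
  assert (HY : Y * (a1 * - a2) = (a1 - a2) - k * Gf a1 a2 b) by (unfold Y, Gf; field; lra).
  assert (0 < / D) by (apply Rinv_0_lt_compat; unfold D; lra).
  assert (0 < a1 * - a2) by nra.
  assert (Hd : Gf a1 a2 b <= (a1 - a2) / k <-> k * Gf a1 a2 b <= a1 - a2).
  { split; intro h.
    - apply (Rmult_le_compat_r k) in h; [|lra].
      replace ((a1 - a2) / k * k) with (a1 - a2) in h by (field; lra). lra.
    - apply (Rmult_le_reg_r k); [lra|].
      replace ((a1 - a2) / k * k) with (a1 - a2) by (field; lra). lra. }
  assert (Hd' : Gf a1 a2 b >= (a1 - a2) / k <-> k * Gf a1 a2 b >= a1 - a2).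
  { split; intro h.
    - apply Rge_le in h. apply (Rmult_le_compat_r k) in h; [|lra].
      replace ((a1 - a2) / k * k) with (a1 - a2) in h by (field; lra). lra.
    - apply Rle_ge. apply (Rmult_le_reg_r k); [lra|].
      replace ((a1 - a2) / k * k) with (a1 - a2) by (field; lra). lra. }
  rewrite Hd, Hd'. split; split; intro; nra.
Qed.

End Helpers.
Import Helpers.

Lemma r_facts mu sigma alpha : 0 < mu -> 0 < sigma -> 0 < alpha ->
  0 < r1 mu sigma alpha /\ r2 mu sigma alpha < 0 /\ r1 mu sigma alpha + r2 mu sigma alpha < 0.
Proof.
  intros. unfold r1, r2.
  set (m := mu / sigma ^ 2). set (p := 2 * alpha / sigma ^ 2).
  assert (0 < m) by (unfold m; apply Rdiv_lt_0_compat; [lra| apply pow_lt; lra]).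
  assert (0 < p) by (unfold p; apply Rdiv_lt_0_compat; [lra| apply pow_lt; lra]).
  replace (mu ^ 2 / sigma ^ 4) with (m ^ 2) by (unfold m; field; lra).
  replace (- mu / sigma ^ 2) with (- m) by (unfold m; field; lra).
  assert (0 <= m ^ 2 + p) by nra.
  pose proof (sqrt_sqrt _ H4). pose proof (sqrt_pos (m ^ 2 + p)).
  assert (m < sqrt (m ^ 2 + p)) by nra.
  lra.
Qed.

Lemma Hfun_eq mu sigma alpha k bss br :
  Hfun mu sigma alpha k bss br = Hf (r1 mu sigma alpha) (r2 mu sigma alpha) k (Rmax br bss).
Proof. reflexivity. Qed.

Theorem mainTheorem4 (mu sigma alpha k bss : R)
  (Hmu : 0 < mu) (Hsigma : 0 < sigma) (Halpha : 0 < alpha) (Hk : 1 < k)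
  (Hbss_pos : 0 < bss) (Hbss : bss_eq mu sigma alpha k bss) :
  let a1 := r1 mu sigma alpha in
  let a2 := r2 mu sigma alpha in
  let c := (a1 - a2) / k in
  (* (I) *)
  (forall br x, 0 <= br -> 0 <= x ->
     exists l, derivable_pt_lim (Hfun mu sigma alpha k bss br) x l /\ 0 < l) /\
  (* (II) *)
  (forall br, 0 <= br ->
     (0 <= Hfun mu sigma alpha k bss br 0 <-> G mu sigma alpha (Rmax br bss) <= c) /\
     (Hfun mu sigma alpha k bss br 0 <= 0 <-> G mu sigma alpha (Rmax br bss) >= c)) /\
  (* (III) *)
  ((condK mu sigma alpha k <-> bss <= bstar mu sigma alpha) /\
   (bss <= bstar mu sigma alpha <-> G mu sigma alpha bss <= c) /\
   (condK_rev mu sigma alpha k <-> bss >= bstar mu sigma alpha) /\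
   (bss >= bstar mu sigma alpha <-> G mu sigma alpha bss >= c)) /\
  (* (IV) *)
  (forall br, 0 <= br -> br <= bss ->
     (0 <= Hfun mu sigma alpha k bss br 0 <-> condK mu sigma alpha k) /\
     (Hfun mu sigma alpha k bss br 0 <= 0 <-> condK_rev mu sigma alpha k)) /\
  (* (V) *)
  (condK_rev mu sigma alpha k ->
     forall br, 0 <= br -> Hfun mu sigma alpha k bss br 0 <= 0) /\
  (* (VI) *)
  (condK mu sigma alpha k ->
     exists bh, bss <= bh /\ G mu sigma alpha bh = c /\
       (forall y, bss <= y -> G mu sigma alpha y = c -> y = bh) /\
       (forall br, 0 <= br ->
          (0 <= Hfun mu sigma alpha k bss br 0 <-> br <= bh))).
Proof.
  intros a1 a2 c.
  destruct (r_facts mu sigma alpha Hmu Hsigma Halpha) as [H1 [H2 H3]].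
  fold a1 a2 in H1, H2, H3.
  assert (HG : forall b, G mu sigma alpha b = Gf a1 a2 b) by reflexivity.
  assert (Hbs : bstar mu sigma alpha = bst a1 a2) by reflexivity.
  assert (Hph : phf a1 a2 bss = k * (a1 - a2)) by exact Hbss.
  assert (HK : Kbound mu sigma alpha = phf a1 a2 (bst a1 a2) / (a1 - a2)) by (apply Kb_eq; auto).
  assert (Hc : 0 < c) by (unfold c; apply Rdiv_lt_0_compat; lra).
  pose proof (bst_pos a1 a2 H1 H2 H3) as Hbst.
  assert (Hmax : forall br, 0 < Rmax br bss) by (intro; pose proof (Rmax_r br bss); lra).
  assert (HII : forall br, 0 <= br ->
     (0 <= Hfun mu sigma alpha k bss br 0 <-> G mu sigma alpha (Rmax br bss) <= c) /\
     (Hfun mu sigma alpha k bss br 0 <= 0 <-> G mu sigma alpha (Rmax br bss) >= c)).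
  { intros br _. rewrite Hfun_eq, HG. apply H0_sign; auto. }
  destruct (Gc_sign a1 a2 k bss H1 H2 ltac:(lra) Hbss_pos Hph) as [Gc1 Gc2].
  pose proof (Gd_le a1 a2 bss H1 H2 H3) as Gl. pose proof (Gd_ge a1 a2 bss H1 H2 H3) as Gg.
  assert (HK1 : condK mu sigma alpha k <-> bss <= bst a1 a2).
  { unfold condK. rewrite HK. rewrite <- (ph_le a1 a2 bss (bst a1 a2)) by lra.
    split; intro h.
    - apply (Rmult_le_compat_r (a1 - a2)) in h; [|lra].
      replace (phf a1 a2 (bst a1 a2) / (a1 - a2) * (a1 - a2)) with (phf a1 a2 (bst a1 a2)) in h
        by (field; lra). rewrite Hph; lra.
    - apply (Rmult_le_reg_r (a1 - a2)); [lra|].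
      replace (phf a1 a2 (bst a1 a2) / (a1 - a2) * (a1 - a2)) with (phf a1 a2 (bst a1 a2))
        by (field; lra). rewrite Hph in h; lra. }
  assert (HK2 : condK_rev mu sigma alpha k <-> bss >= bst a1 a2).
  { unfold condK_rev. rewrite HK.
    assert (bss >= bst a1 a2 <-> phf a1 a2 (bst a1 a2) <= phf a1 a2 bss).
    { rewrite (ph_le a1 a2 (bst a1 a2) bss) by lra. lra. }
    rewrite H. rewrite Hph. split; intro h.
    - apply Rge_le in h. apply (Rmult_le_compat_r (a1 - a2)) in h; [|lra].
      replace (phf a1 a2 (bst a1 a2) / (a1 - a2) * (a1 - a2)) with (phf a1 a2 (bst a1 a2)) in h
        by (field; lra). lra.
    - apply Rle_ge. apply (Rmult_le_reg_r (a1 - a2)); [lra|].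
      replace (phf a1 a2 (bst a1 a2) / (a1 - a2) * (a1 - a2)) with (phf a1 a2 (bst a1 a2))
        by (field; lra). lra. }
  assert (HIII1 : bss <= bst a1 a2 <-> Gf a1 a2 bss <= c) by (unfold c; rewrite Gc1; tauto).
  assert (HIII2 : bss >= bst a1 a2 <-> Gf a1 a2 bss >= c) by (unfold c; rewrite Gc2; tauto).
  split; [|split; [exact HII|split; [|split; [|split]]]].
  - intros br x _ _. rewrite Hfun_eq. apply Hf_der; auto.
  - rewrite Hbs, !HG. tauto.
  - intros br Hbr Hle. specialize (HII br Hbr). rewrite Rmax_right in HII by lra. rewrite !HG in HII. rewrite HK1, HK2, HIII1, HIII2. tauto.
  - intros Hr br Hbr. apply (HII br Hbr). rewrite HG.
    apply HK2 in Hr. pose proof Hr as Hr'. apply HIII2 in Hr'.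
    destruct (Req_dec (Rmax br bss) bss) as [e|e]. rewrite e; auto.
    assert (bss < Rmax br bss) by (pose proof (Rmax_r br bss); lra).
    pose proof (G_incr a1 a2 bss (Rmax br bss) H1 H2 H3 ltac:(lra) H). lra.
  - intros HKc. apply HK1 in HKc. pose proof HKc as HGb. apply HIII1 in HGb.
    assert (Hlow : forall y, bss <= y -> y < bst a1 a2 -> Gf a1 a2 y < c).
    { intros y Hy1 Hy2. assert (Gf a1 a2 bss < c).
      { destruct (Rlt_dec (Gf a1 a2 bss) c); auto. exfalso.
        assert (bss >= bst a1 a2) by (apply HIII2; lra). lra. }
      destruct (Req_dec y bss). subst; auto.
      pose proof (G_decr a1 a2 bss y H1 H2 H3 ltac:(lra) ltac:(lra)). lra. }
    assert (HGst : Gf a1 a2 (bst a1 a2) <= c).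
    { destruct (Req_dec bss (bst a1 a2)) as [e|e]. rewrite <- e; auto.
      pose proof (G_decr a1 a2 bss (bst a1 a2) H1 H2 H3 ltac:(lra) ltac:(lra)). lra. }
    set (M := bst a1 a2 + c / a1 ^ 2 + 1).
    assert (HM : c <= Gf a1 a2 M).
    { unfold Gf. pose proof (exp_pos (a2 * M)).
      assert (0 < c / a1 ^ 2) by (apply Rdiv_lt_0_compat; nra).
      assert (1 + a1 * M < exp (a1 * M)) by (apply exp_ineq1; unfold M; nra).
      assert (a1 ^ 2 * (c / a1 ^ 2) = c) by (field; lra).
      assert (a1 * (a1 * M) >= c) by (unfold M; nra). nra. }
    assert (Hcont : continuity (fun y => Gf a1 a2 y - c)).
    { intro x. apply continuity_pt_minus.
      - apply derivable_continuous_pt. exists (Gd a1 a2 x). apply Gf_der.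
      - apply continuity_pt_const. intros u v; reflexivity. }
    destruct (IVT_cor _ (bst a1 a2) M Hcont ltac:(unfold M; assert (0 < c / a1 ^ 2) by (apply Rdiv_lt_0_compat; nra); lra) ltac:(nra))
      as [z [Hz1 Hz2]].
    assert (Gz : Gf a1 a2 z = c) by lra.
    assert (Key : forall y, bss <= y -> (Gf a1 a2 y <= c <-> y <= z) /\ (Gf a1 a2 y = c -> y = z)).
    { intros y Hy. destruct (Rlt_dec y (bst a1 a2)).
      - pose proof (Hlow y Hy r). split; [split; intro; lra|intro; lra].
      - destruct (Rtotal_order y z) as [h|[h|h]].
        + pose proof (G_incr a1 a2 y z H1 H2 H3 ltac:(lra) h). split; [split; intro; lra|intro; lra].
        + subst; split; [split; intro; lra|auto].
        + pose proof (G_incr a1 a2 z y H1 H2 H3 ltac:(lra) h). split; [split; intro; lra|intro; lra]. }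
    exists z. split; [lra|split; [rewrite HG; exact Gz|split]].
    + intros y Hy Hyc. rewrite HG in Hyc. apply (Key y Hy). exact Hyc.
    + intros br Hbr. destruct (HII br Hbr) as [HA _]. rewrite HA, HG.
      rewrite (proj1 (Key (Rmax br bss) (Rmax_r br bss))).
      split; intro h. pose proof (Rmax_l br bss); lra.
      apply Rmax_lub; lra.
Qed.
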